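(* Let $d=2^n$, let $|z\rangle\in\mathbb{C}^d$ be a unit vector, let $\mathcal{M}_{C,z}$ be the Clifford POVM generated by $|z\rangle$, and let $W$ be any Pauli operator with $W\neq\mathbb{I}$. Then $$\|\mathcal{M}_{C,z}(W)\|_{\ell_1}=\frac{\|\Xi(|z\rangle\langle z|)\|_{\ell_1}-1}{(d+1)(d-1)}\,\|W\|_1.$$
   Context: $d=2^n$. The Pauli operators $W_1=\mathbb{I},\dots,W_{d^2}$ are all $n$-fold tensor products of $\sigma_0=\mathbb{I},\sigma_1,\sigma_2,\sigma_3$ (single-qubit Pauli matrices); the Pauli group is $\{\pm W_k,\pm iW_k\}$. The Clifford group $\mathrm{C}_n$ is the group of unitaries normalizing the Pauli group. For a unit vector $|z\rangle$, let $\{|x_k\rangle\langle x_k|\}_{k=1}^N$ be the distinct projectors in the orbit $\{U|z\rangle\langle z|U^\dagger:U\in\mathrm{C}_n\}$; $\mathcal{M}_{C,z}$ has POVM elements $\frac dN|x_k\rangle\langle x_k|$ and $\mathcal{M}_{C,z}(X)=(\mathrm{tr}(\frac dN|x_k\rangle\langle x_k|X))_{k=1}^N$. The characteristic function of a Hermitian $\rho$ is $\Xi(\rho)=(\mathrm{tr}(W_k\rho))_{k=1}^{d^2}\in\mathbb{R}^{d^2}$. $\|\cdot\|_{\ell_1}$ is the vector $\ell_1$-norm, $\|\cdot\|_1$ the trace norm. *)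

(* Defs.v *)
(* Complex scalars: an arbitrary numClosedFieldType C
   (algebraically closed field with conjugation and order/norm, e.g. the complex numbers). *)
From HB Require Import structures.
From mathcomp Require Import all_boot all_order all_algebra.
Set Implicit Arguments. Unset Strict Implicit. Unset Printing Implicit Defensive.
Import Order.TTheory GRing.Theory Num.Theory.
Local Open Scope ring_scope.

Section Defs.
Variable C : numClosedFieldType.

Definition adjmx m n (A : 'M[C]_(m, n)) : 'M[C]_(n, m) := (map_mx Num.conj A)^T.

(* single-qubit Pauli matrices sigma_0 = I, sigma_1, sigma_2, sigma_3;
   entry (r, c) with rows/columns indexed by bits (false = |0>, true = |1>) *)
Definition sigma (a : 'I_4) (r c : bool) : C :=
  match val a with
  | 0%N => if r == c then 1 else 0
  | 1%N => if r != c then 1 else 0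
  | 2%N => if r == c then 0 else (if r then 'i else - 'i)
  | _ => if r == c then (if r then -1 else 1) else 0
  end.

Definition bitk (k : nat) (i : nat) : bool := odd (i %/ 2 ^ k).

(* n-fold tensor product sigma_{p 0} (x) ... (x) sigma_{p (n-1)}, written entrywise:
   qubit k corresponds to bit k of the basis index of C^(2^n). *)
Definition pauli (n : nat) (p : {ffun 'I_n -> 'I_4}) : 'M[C]_(2 ^ n) :=
  \matrix_(i, j) \prod_(k < n) sigma (p k) (bitk k i) (bitk k j).

Definition pauli_id (n : nat) : {ffun 'I_n -> 'I_4} := [ffun _ => ord0].

Definition in_pauli_group (n : nat) (M : 'M[C]_(2 ^ n)) : Prop :=
  exists (c : C) (p : {ffun 'I_n -> 'I_4}),
    [\/ c = 1, c = -1, c = 'i | c = - 'i] /\ M = c *: pauli p.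

Definition unitary (n : nat) (U : 'M[C]_(2 ^ n)) : Prop :=
  U *m adjmx U = 1%:M.

Definition clifford (n : nat) (U : 'M[C]_(2 ^ n)) : Prop :=
  unitary U /\
  (forall P, in_pauli_group P -> in_pauli_group (U *m P *m adjmx U)) /\
  (forall Q, in_pauli_group Q -> exists P, in_pauli_group P /\ Q = U *m P *m adjmx U).

Definition proj (n : nat) (z : 'cV[C]_(2 ^ n)) : 'M[C]_(2 ^ n) := z *m adjmx z.

Definition clifford_orbit_enum (n : nat) (z : 'cV[C]_(2 ^ n)) (xs : seq 'M[C]_(2 ^ n)) : Prop :=
  uniq xs /\
  forall P, P \in xs <-> exists U, clifford U /\ P = U *m proj z *m adjmx U.

(* l1-norm of the outcome vector M_{C,z}(X) = (tr (d/N |x_k><x_k| X))_k *)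
Definition povm_l1 (n : nat) (xs : seq 'M[C]_(2 ^ n)) (X : 'M[C]_(2 ^ n)) : C :=
  \sum_(P <- xs) `| \tr (((2 ^ n)%:R / (size xs)%:R) *: P *m X) |.

(* l1-norm of the characteristic function Xi(rho) = (tr (W_k rho))_k *)
Definition char_l1 (n : nat) (rho : 'M[C]_(2 ^ n)) : C :=
  \sum_(p : {ffun 'I_n -> 'I_4}) `| \tr (pauli p *m rho) |.

Definition psd m (B : 'M[C]_m) : Prop :=
  forall v : 'cV[C]_m, 0 <= (adjmx v *m B *m v) 0 0.

(* t is the trace norm of A: t = tr |A| with |A| = sqrt(A^dag A) the PSD square root *)
Definition trace_norm_is m (A : 'M[C]_m) (t : C) : Prop :=
  exists B : 'M[C]_m, psd B /\ B *m B = adjmx A *m A /\ t = \tr B.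

End Defs.

Arguments pauli {C n} p.
Arguments char_l1 {C n} rho.
Arguments povm_l1 {C n} xs X.
Arguments proj {C n} z.
Arguments clifford_orbit_enum {C n} z xs.
Arguments trace_norm_is {C m} A t.
Arguments adjmx {C m n} A.

(* Main.v *)
Require Import Defs.
From HB Require Import structures.
From mathcomp Require Import all_boot all_order all_algebra.
From mathcomp Require Import zify ring.
Import Order.TTheory GRing.Theory Num.Theory.
Local Open Scope ring_scope.
Set Implicit Arguments. Unset Strict Implicit. Unset Printing Implicit Defensive.

Lemma bitk0 i : bitk 0 i = odd i.
Proof. by rewrite /bitk expn0 divn1. Qed.
Lemma bitkS k i : bitk k.+1 i = bitk k i./2.
Proof. by rewrite /bitk expnS divnMA divn2. Qed.

Lemma sum_double {C : nmodType} N (g : nat -> C) :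
  \sum_(0 <= i < N.*2) g i = \sum_(0 <= j < N) (g j.*2 + g j.*2.+1).
Proof.
elim: N => [|N IH]; first by rewrite !big_geq.
by rewrite doubleS !big_nat_recr //= IH addrA.
Qed.

Lemma sum_bits_nat {C : comPzSemiRingType} n (f : nat -> bool -> C) :
  \sum_(0 <= i < 2 ^ n) \prod_(0 <= m < n) f m (bitk m i)
  = \prod_(0 <= m < n) (f m false + f m true).
Proof.
elim: n f => [|n IH] f; first by rewrite expn0 big_nat1 !big_geq.
rewrite expnS mul2n sum_double [RHS]big_nat_recl //.
rewrite -(IH (fun m => f m.+1)) mulr_sumr.
apply: eq_bigr => j _; rewrite !big_nat_recl // !bitk0 odd_double /=.
rewrite mulrDl; congr (_ * _ + _ * _); rewrite ?odd_double //;
  apply: eq_bigr => m _; rewrite bitkS; congr (f _ (bitk _ _)).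
  by rewrite doubleK.
by rewrite -addn1 halfD odd_double /= addn0 doubleK.
Qed.

Lemma sum_bits {C : comPzSemiRingType} n (f : 'I_n -> bool -> C) :
  \sum_(i < 2 ^ n) \prod_(m < n) f m (bitk m i)
  = \prod_(m < n) (f m false + f m true).
Proof.
pose g (m : nat) b := if insub m is Some m' then f m' b else 1.
have E : forall (h : 'I_n -> C) , \prod_(m < n) h m = \prod_(0 <= m < n) (if insub m is Some m' then h m' else 1).
  move=> h; rewrite big_mkord; apply: eq_bigr => m _; by rewrite valK.
have Hg : forall m b, (m < n)%N -> forall (H : (m < n)%N), g m b = f (Ordinal H) b.
  by move=> m b _ H; rewrite /g insubT.
rewrite E (_ : \prod_(0 <= m < n) _ = \prod_(0 <= m < n) (g m false + g m true)); last first.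
  by apply: eq_big_nat => m /andP [_ Hm]; rewrite /g insubT.
rewrite -(sum_bits_nat n g) big_mkord; apply: eq_bigr => i _.
rewrite E; apply: eq_big_nat => m /andP [_ Hm].
by rewrite /g insubT.
Qed.

Lemma bits_inj n i j : (i < 2 ^ n)%N -> (j < 2 ^ n)%N ->
  (forall m, (m < n)%N -> bitk m i = bitk m j) -> i = j.
Proof.
elim: n i j => [|n IH] i j.
  by rewrite expn0 !ltnS !leqn0 => /eqP -> /eqP ->.
move=> Hi Hj Hb.
have H0 := Hb 0%N isT; rewrite !bitk0 in H0.
have Hh : i./2 = j./2.
  apply: IH.
  - by rewrite -divn2 ltn_divLR // -expnSr.
  - by rewrite -divn2 ltn_divLR // -expnSr.
  by move=> m Hm; rewrite -!bitkS; apply: Hb.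
by rewrite -(odd_double_half i) -(odd_double_half j) H0 Hh.
Qed.

Definition tens {C : pzRingType} n (F : 'I_n -> bool -> bool -> C) : 'M[C]_(2 ^ n) :=
  \matrix_(i, j) \prod_(m < n) F m (bitk m i) (bitk m j).
Definition m2 {C : pzRingType} (F G : bool -> bool -> C) (r c : bool) :=
  F r false * G false c + F r true * G true c.
Definition adj2 {C : numClosedFieldType} (F : bool -> bool -> C) (r c : bool) := (F c r)^*.

Lemma tens_mul {C : comPzRingType} n (F G : 'I_n -> bool -> bool -> C) :
  tens F *m tens G = tens (fun m => m2 (F m) (G m)).
Proof.
apply/matrixP => i j; rewrite !mxE.
rewrite (eq_bigr (fun k : 'I_(2^n) => \prod_(m < n) (F m (bitk m i) (bitk m k) * G m (bitk m k) (bitk m j)))); last first.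
  by move=> k _; rewrite !mxE big_split.
by rewrite (sum_bits (fun m b => F m (bitk m i) b * G m b (bitk m j))).
Qed.

Lemma tens_tr {C : comPzRingType} n (F : 'I_n -> bool -> bool -> C) :
  \tr (tens F) = \prod_(m < n) (F m false false + F m true true).
Proof.
rewrite /mxtrace (eq_bigr (fun k : 'I_(2^n) => \prod_(m < n) F m (bitk m k) (bitk m k))).
  by rewrite (sum_bits (fun m b => F m b b)).
by move=> k _; rewrite mxE.
Qed.

Lemma tens_adj {C : numClosedFieldType} n (F : 'I_n -> bool -> bool -> C) :
  adjmx (tens F) = tens (fun m => adj2 (F m)).
Proof. by apply/matrixP => i j; rewrite !mxE rmorph_prod. Qed.

Lemma tens_eq {C : pzRingType} n (F G : 'I_n -> bool -> bool -> C) :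
  (forall m r c, F m r c = G m r c) -> tens F = tens G.
Proof. by move=> H; apply/matrixP => i j; rewrite !mxE; apply: eq_bigr. Qed.

Lemma tens_scale {C : comPzRingType} n (F G : 'I_n -> bool -> bool -> C) (a : 'I_n -> C) :
  (forall m r c, F m r c = a m * G m r c) -> tens F = (\prod_(m < n) a m) *: tens G.
Proof.
move=> H; apply/matrixP => i j; rewrite !mxE -big_split /=.
by apply: eq_bigr => m _; rewrite H.
Qed.

Lemma tens_id {C : numClosedFieldType} n :
  tens (fun _ : 'I_n => @sigma C ord0) = 1%:M.
Proof.
apply/matrixP => i j; rewrite !mxE.
case: (eqVneq i j) => [->|Hij].
  by rewrite big1 // => m _; rewrite /sigma /= eqxx.
have [m Hm] : exists m : 'I_n, bitk m i != bitk m j.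
  apply/existsP; apply: contraR Hij; rewrite negb_exists => /forallP H.
  apply/eqP/val_inj/(@bits_inj n); rewrite ?ltn_ord // => m Hm.
  by have := H (Ordinal Hm); rewrite negbK => /eqP.
rewrite (bigD1 m) //= {1}/sigma /= (negbTE Hm) mul0r.
by [].
Qed.

Lemma pauliE {C : numClosedFieldType} n (p : {ffun 'I_n -> 'I_4}) :
  pauli p = tens (fun m => @sigma C (p m)).
Proof. by []. Qed.

Lemma pauli_id1 {C : numClosedFieldType} n : pauli (pauli_id n) = 1%:M :> 'M[C]_(2^n).
Proof. by rewrite pauliE -(tens_id (C:=C) n); apply: tens_eq => m r c; rewrite ffunE. Qed.

Arguments sigma {C} a r c.

Lemma iiE {C : numClosedFieldType} (x : C) : 'i * ('i * x) = - x.
Proof. by rewrite mulrA mulCii mulN1r. Qed.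
Lemma iiE' {C : numClosedFieldType} (x : C) : x * 'i * 'i = - x.
Proof. by rewrite -mulrA mulCii mulrN1. Qed.

Lemma conjN' {C : numClosedFieldType} (x : C) : (- x)^* = - x^*.
Proof. exact: rmorphN. Qed.
Lemma conj1' {C : numClosedFieldType} : (1 : C)^* = 1.
Proof. exact: rmorph1. Qed.
Lemma conj0' {C : numClosedFieldType} : (0 : C)^* = 0.
Proof. exact: rmorph0. Qed.

Ltac csimp := rewrite /= ?(mul0r, mulr0, mul1r, mulr1, add0r, addr0, mulrN, mulNr, opprK,
   conjN', conjCi, conj0', conj1', mulCii, oppr0, iiE, iiE', mulrNN, subrr);
  rewrite ?(mul0r, mulr0, mul1r, mulr1, add0r, addr0, mulrN, mulNr, opprK, oppr0, mulrNN, subrr).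

Lemma sigma_herm {C : numClosedFieldType} a r c : (sigma (C:=C) a c r)^* = sigma a r c.
Proof. case: a => [[|[|[|[|?]]]] ?] //=. all: by case: r; case: c; rewrite /sigma /=; csimp. Qed.

Lemma sigma_sq {C : numClosedFieldType} a r c : m2 (sigma (C:=C) a) (sigma a) r c = sigma ord0 r c.
Proof. case: a => [[|[|[|[|?]]]] ?] //=. all: by case: r; case: c; rewrite /m2 /sigma /=; csimp. Qed.

Lemma m2_1l {C : numClosedFieldType} (F : bool -> bool -> C) r c : m2 (sigma ord0) F r c = F r c.
Proof. by case: r; rewrite /m2 /sigma /=; csimp. Qed.
Lemma m2_1r {C : numClosedFieldType} (F : bool -> bool -> C) r c : m2 F (sigma ord0) r c = F r c.
Proof. by case: c; rewrite /m2 /sigma /=; csimp. Qed.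
Lemma adj2_1 {C : numClosedFieldType} r c : adj2 (sigma (C:=C) ord0) r c = sigma ord0 r c.
Proof. by case: r; case: c; rewrite /adj2 /sigma /=; csimp. Qed.

Lemma sigma_tr {C : numClosedFieldType} (a b : 'I_4) :
  m2 (sigma (C:=C) a) (sigma b) false false + m2 (sigma a) (sigma b) true true
  = if a == b then 2 else 0.
Proof.
case: a => [[|[|[|[|?]]]] ?] //=. all: case: b => [[|[|[|[|?]]]] ?] //=. all: rewrite /m2 /sigma /=; csimp; ring.
Qed.

Arguments sigma {C} a r c.

Lemma pauli_herm {C : numClosedFieldType} n (p : {ffun 'I_n -> 'I_4}) :
  adjmx (pauli p) = pauli p :> 'M[C]_(2^n).
Proof. by rewrite pauliE tens_adj; apply: tens_eq => m r c; rewrite /adj2 sigma_herm. Qed.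

Lemma pauli_sq {C : numClosedFieldType} n (p : {ffun 'I_n -> 'I_4}) :
  pauli p *m pauli p = 1%:M :> 'M[C]_(2^n).
Proof. by rewrite pauliE tens_mul -(tens_id (C:=C) n); apply: tens_eq => m r c; rewrite sigma_sq. Qed.

Lemma pauli_tr {C : numClosedFieldType} n (p q : {ffun 'I_n -> 'I_4}) :
  \tr (pauli p *m pauli q) = if p == q then (2 ^ n)%:R else 0 :> C.
Proof.
rewrite !pauliE tens_mul tens_tr.
rewrite (eq_bigr (fun m => if p m == q m then 2 else 0)); last by move=> m _; rewrite sigma_tr.
case: eqVneq => [->|Hpq].
  by rewrite (eq_bigr (fun _ => 2)) ?prodr_const ?card_ord ?natrX // => m _; rewrite eqxx.
have [m Hm] : exists m, p m != q m.
  apply/existsP; apply: contraR Hpq; rewrite negb_exists => /forallP H.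
  by apply/eqP/ffunP => m; have := H m; rewrite negbK => /eqP.
by rewrite (bigD1 m) //= (negbTE Hm) mul0r.
Qed.

Definition isph {C : numClosedFieldType} (c : C) := [\/ c = 1, c = -1, c = 'i | c = -'i].

Lemma isph1 {C : numClosedFieldType} : isph (1 : C).
Proof. by constructor 1. Qed.

Lemma isph_mul {C : numClosedFieldType} (a b : C) : isph a -> isph b -> isph (a * b).
Proof.
by case=> ->; case=> ->; rewrite ?(mul1r, mulr1, mulrNN, mulNr, mulrN, opprK, mulCii);
  [constructor 1|constructor 2|constructor 3|constructor 4|constructor 2|constructor 1|constructor 4|constructor 3
  |constructor 3|constructor 4|constructor 2|constructor 1|constructor 4|constructor 3|constructor 1|constructor 2].
Qed.

Lemma isph_norm {C : numClosedFieldType} (c : C) : isph c -> `|c| = 1.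
Proof. by case=> ->; rewrite ?normrN ?normr1 ?normCi. Qed.

Lemma isph_neq0 {C : numClosedFieldType} (c : C) : isph c -> c != 0.
Proof. by move=> /isph_norm H; apply/eqP => c0; move: H; rewrite c0 normr0 => /eqP; rewrite eq_sym oner_eq0. Qed.

Lemma isph_conj {C : numClosedFieldType} (c : C) : isph c -> c * c^* = 1.
Proof. by move=> H; rewrite -normCK isph_norm // expr1n. Qed.

Lemma isph_inv {C : numClosedFieldType} (c : C) : isph c -> isph c^-1.
Proof.
move=> H; have -> : c^-1 = c^*.
  by apply: (mulfI (isph_neq0 H)); rewrite divff ?isph_conj ?isph_neq0.
by case: H => ->; rewrite ?conjN' ?conj1' ?conjCi ?opprK;
  [constructor 1|constructor 2|constructor 4|constructor 3].
Qed.

Lemma adjmxM {C : numClosedFieldType} m n k (A : 'M[C]_(m, n)) (B : 'M[C]_(n, k)) :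
  adjmx (A *m B) = adjmx B *m adjmx A.
Proof. by rewrite /adjmx map_mxM trmx_mul. Qed.

Lemma adjmxZ {C : numClosedFieldType} m n (a : C) (A : 'M[C]_(m, n)) :
  adjmx (a *: A) = a^* *: adjmx A.
Proof. by apply/matrixP => i j; rewrite !mxE rmorphM. Qed.

Lemma adjmxK {C : numClosedFieldType} m n (A : 'M[C]_(m, n)) : adjmx (adjmx A) = A.
Proof. by apply/matrixP => i j; rewrite !mxE conjCK. Qed.

Lemma adjmx1 {C : numClosedFieldType} n : adjmx (1%:M : 'M[C]_n) = 1%:M.
Proof. by apply/matrixP => i j; rewrite !mxE rmorph_nat eq_sym. Qed.

Lemma unitaryC {C : numClosedFieldType} n (U : 'M[C]_(2^n)) : unitary U -> adjmx U *m U = 1%:M.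
Proof. exact: mulmx1C. Qed.

Lemma pg_scale {C : numClosedFieldType} n (c : C) (M : 'M[C]_(2^n)) :
  isph c -> in_pauli_group M -> in_pauli_group (c *: M).
Proof.
move=> Hc [d [p [Hd ->]]]; exists (c * d), p; split; last by rewrite scalerA.
exact: isph_mul.
Qed.

Lemma clifford_of {C : numClosedFieldType} n (V : 'M[C]_(2^n)) :
  unitary V ->
  (forall p, in_pauli_group (V *m pauli p *m adjmx V)) ->
  (forall p, in_pauli_group (adjmx V *m pauli p *m V)) -> clifford V.
Proof.
move=> HU H1 H2; split => //; split.
  move=> P [c [p [Hc ->]]]; rewrite -scalemxAr -scalemxAl; exact: pg_scale.
move=> Q [c [p [Hc ->]]]; exists (c *: (adjmx V *m pauli p *m V)); split.
  exact: pg_scale.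
rewrite -scalemxAr -scalemxAl; congr (_ *: _).
by rewrite !mulmxA HU mul1mx -mulmxA HU mulmx1.
Qed.

Lemma clifford1 {C : numClosedFieldType} n : clifford (1%:M : 'M[C]_(2^n)).
Proof.
apply: clifford_of; first by rewrite /unitary adjmx1 mul1mx.
  by move=> p; rewrite adjmx1 mul1mx mulmx1; exists 1, p; split; [exact: isph1|rewrite scale1r].
by move=> p; rewrite adjmx1 mul1mx mulmx1; exists 1, p; split; [exact: isph1|rewrite scale1r].
Qed.

Lemma clifford_mul {C : numClosedFieldType} n (U V : 'M[C]_(2^n)) :
  clifford U -> clifford V -> clifford (U *m V).
Proof.
move=> [HU [HU1 HU2]] [HV [HV1 HV2]]; split; [|split].
- by rewrite /unitary adjmxM mulmxA -(mulmxA U) HV mulmx1 HU.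
- move=> P HP; rewrite adjmxM.
  have -> : U *m V *m P *m (adjmx V *m adjmx U) = U *m (V *m P *m adjmx V) *m adjmx U by rewrite !mulmxA.
  by apply: HU1; apply: HV1.
- move=> Q HQ; have [P1 [HP1 ->]] := HU2 Q HQ; have [P2 [HP2 ->]] := HV2 P1 HP1.
  by exists P2; split => //; rewrite adjmxM !mulmxA.
Qed.

Lemma clifford_adj {C : numClosedFieldType} n (U : 'M[C]_(2^n)) :
  clifford U -> clifford (adjmx U).
Proof.
move=> [HU [HU1 HU2]]; have HU' := unitaryC HU; split; [|split].
- by rewrite /unitary adjmxK.
- move=> P HP; have [P1 [HP1 ->]] := HU2 P HP.
  by rewrite adjmxK !mulmxA HU' mul1mx -mulmxA HU' mulmx1.
- move=> Q HQ; exists (U *m Q *m adjmx U); split; first exact: HU1.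
  by rewrite adjmxK !mulmxA HU' mul1mx -mulmxA HU' mulmx1.
Qed.

Arguments sigma {C} a r c.

Definition s0 : 'I_4 := ord0.
Definition s1 : 'I_4 := @Ordinal 4 1 isT.
Definition s2 : 'I_4 := @Ordinal 4 2 isT.
Definition s3 : 'I_4 := @Ordinal 4 3 isT.

Definition upd n (p : {ffun 'I_n -> 'I_4}) (k : 'I_n) (b : 'I_4) : {ffun 'I_n -> 'I_4} :=
  [ffun m => if m == k then b else p m].

Definition lgate {C : numClosedFieldType} n (g : bool -> bool -> C) (k : 'I_n) : 'M[C]_(2^n) :=
  tens (fun m => if m == k then g else sigma ord0).

Lemma m2_adj1r {C : numClosedFieldType} (F : bool -> bool -> C) r c : m2 F (adj2 (sigma ord0)) r c = F r c.
Proof. by case: c; rewrite /m2 /adj2 /sigma /=; csimp. Qed.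

Lemma prod_if1 {C : comPzRingType} n (k : 'I_n) (x : C) :
  \prod_(m < n) (if m == k then x else 1) = x.
Proof. by rewrite -big_mkcond big_pred1_eq. Qed.

Lemma lgate_conj {C : numClosedFieldType} n (g : bool -> bool -> C) (k : 'I_n) (p : {ffun 'I_n -> 'I_4}) b lam :
  (forall r c, m2 (m2 g (sigma (p k))) (adj2 g) r c = lam * sigma b r c) ->
  lgate g k *m pauli p *m adjmx (lgate g k) = lam *: pauli (upd p k b).
Proof.
move=> H; rewrite pauliE /lgate tens_adj !tens_mul pauliE.
rewrite (@tens_scale _ _ _ (fun m => sigma (upd p k b m)) (fun m => if m == k then lam else 1)) ?prod_if1 //.
move=> m r c; rewrite ffunE; case: eqVneq => [->|_]; first by rewrite H.
by rewrite m2_adj1r m2_1l mul1r.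
Qed.

Lemma lgate_adj {C : numClosedFieldType} n (g : bool -> bool -> C) (k : 'I_n) :
  adjmx (lgate g k) = lgate (adj2 g) k.
Proof.
rewrite /lgate tens_adj; apply: tens_eq => m r c.
by case: eqVneq => // _; rewrite adj2_1.
Qed.

Lemma slgate_conj {C : numClosedFieldType} n (g : bool -> bool -> C) (k : 'I_n) (s : C) (p : {ffun 'I_n -> 'I_4}) b lam :
  (forall r c, m2 (m2 g (sigma (p k))) (adj2 g) r c = lam * sigma b r c) ->
  (s *: lgate g k) *m pauli p *m adjmx (s *: lgate g k) = (s * s^* * lam) *: pauli (upd p k b).
Proof.
move=> H; rewrite adjmxZ -scalemxAl -scalemxAr -scalemxAl scalerA (lgate_conj H) scalerA.
by rewrite (mulrC s^*).
Qed.

Lemma upd_id n k : upd (pauli_id n) k s0 = pauli_id n.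
Proof. by apply/ffunP => m; rewrite !ffunE; case: eqP. Qed.

Lemma lgate_clifford {C : numClosedFieldType} n (g : bool -> bool -> C) (k : 'I_n) (s lam : C)
  (tf tf' : 'I_4 -> 'I_4) (tp tp' : 'I_4 -> C) :
  s * s^* * lam = 1 ->
  (forall a, isph (tp a) /\ forall r c, m2 (m2 g (sigma a)) (adj2 g) r c = lam * tp a * sigma (tf a) r c) ->
  (forall a, isph (tp' a) /\ forall r c, m2 (m2 (adj2 g) (sigma a)) (adj2 (adj2 g)) r c = lam * tp' a * sigma (tf' a) r c) ->
  tf s0 = s0 -> tp s0 = 1 ->
  clifford (s *: lgate g k).
Proof.
move=> Hs Ht Ht' H0 H1; apply: clifford_of.
- rewrite /unitary -[X in X *m _](mulmx1) -(pauli_id1 (C:=C) n).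
  rewrite (@slgate_conj _ _ _ _ _ _ (tf s0) (lam * tp s0)); last first.
    by move=> r c; rewrite ffunE; apply: (proj2 (Ht s0)).
  by rewrite H0 H1 mulr1 upd_id Hs scale1r pauli_id1.
- move=> p; exists (tp (p k)), (upd p k (tf (p k))); split; first by case: (Ht (p k)).
  rewrite (@slgate_conj _ _ _ _ _ _ (tf (p k)) (lam * tp (p k))); last first.
    by move=> r c; apply: (proj2 (Ht (p k))).
  by rewrite mulrA Hs mul1r.
- move=> p; exists (tp' (p k)), (upd p k (tf' (p k))); split; first by case: (Ht' (p k)).
  rewrite -{2}(adjmxK (s *: lgate g k)) adjmxZ lgate_adj.
  rewrite (@slgate_conj _ _ _ _ _ _ (tf' (p k)) (lam * tp' (p k))); last first.
    by move=> r c; apply: (proj2 (Ht' (p k))).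
  by rewrite conjCK mulrA (mulrC s^*) Hs mul1r.
Qed.

Arguments sigma {C} a r c.

Ltac solve_ph := rewrite /isph; first [by constructor 1|by constructor 2|by constructor 3|by constructor 4].

Definition hs {C : numClosedFieldType} (r c : bool) : C := if r && c then -1 else 1.
Definition hsc {C : numClosedFieldType} : C := (sqrtC 2)^-1.
Definition hf (a : 'I_4) : 'I_4 := match val a with 1%N => s3 | 3%N => s1 | _ => a end.
Definition hp {C : numClosedFieldType} (a : 'I_4) : C := match val a with 2%N => -1 | _ => 1 end.

Lemma hsc_ok {C : numClosedFieldType} : hsc * hsc^* * 2 = 1 :> C.
Proof.
have s0 : 0 <= hsc :> C by rewrite /hsc invr_ge0 sqrtC_ge0 ler0n.
rewrite geC0_conj // /hsc -invrM ?unitfE ?sqrtC_eq0 ?pnatr_eq0 //.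
by rewrite -expr2 sqrtCK mulVf // pnatr_eq0.
Qed.

Lemma hs_table {C : numClosedFieldType} : forall a, isph (hp (C:=C) a) /\ forall r c,
  m2 (m2 (@hs C) (sigma a)) (adj2 hs) r c = 2 * hp a * sigma (hf a) r c.
Proof.
move=> a; case: a => [[|[|[|[|?]]]] ?] //=. all: split; [solve_ph|]. all: by case; case; rewrite /m2 /adj2 /hs /sigma /hp /hf /=; csimp; ring.
Qed.

Lemma hs_table' {C : numClosedFieldType} : forall a, isph (hp (C:=C) a) /\ forall r c,
  m2 (m2 (adj2 (@hs C)) (sigma a)) (adj2 (adj2 hs)) r c = 2 * hp a * sigma (hf a) r c.
Proof.
move=> a; case: a => [[|[|[|[|?]]]] ?] //=. all: split; [solve_ph|]. all: by case; case; rewrite /m2 /adj2 /hs /sigma /hp /hf /=; csimp; ring.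
Qed.

Lemma hgate_clifford {C : numClosedFieldType} n (k : 'I_n) : clifford (hsc *: lgate (@hs C) k).
Proof. by apply: (@lgate_clifford C n hs k hsc 2 hf hf hp hp hsc_ok hs_table hs_table'). Qed.

Lemma hgate_conj {C : numClosedFieldType} n (k : 'I_n) (p : {ffun 'I_n -> 'I_4}) :
  let V := hsc *: lgate (@hs C) k in
  V *m pauli p *m adjmx V = hp (p k) *: pauli (upd p k (hf (p k))).
Proof.
rewrite /= (@slgate_conj _ _ _ _ _ _ (hf (p k)) (2 * hp (p k))); last first.
  by move=> r c; apply: (proj2 (hs_table (p k))).
by rewrite mulrA hsc_ok mul1r.
Qed.

Definition sg {C : numClosedFieldType} (r c : bool) : C := if r == c then (if r then 'i else 1) else 0.
Definition sf (a : 'I_4) : 'I_4 := match val a with 1%N => s2 | 2%N => s1 | _ => a end.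
Definition sp {C : numClosedFieldType} (a : 'I_4) : C := match val a with 2%N => -1 | _ => 1 end.
Definition sp' {C : numClosedFieldType} (a : 'I_4) : C := match val a with 1%N => -1 | _ => 1 end.

Lemma sg_table {C : numClosedFieldType} : forall a, isph (sp (C:=C) a) /\ forall r c,
  m2 (m2 (@sg C) (sigma a)) (adj2 sg) r c = 1 * sp a * sigma (sf a) r c.
Proof.
move=> a; case: a => [[|[|[|[|?]]]] ?] //=. all: split; [solve_ph|]. all: case; case; rewrite /m2 /adj2 /sg /sigma /sp /sp' /sf /=; csimp. all: ring.
Qed.

Lemma sg_table' {C : numClosedFieldType} : forall a, isph (sp' (C:=C) a) /\ forall r c,
  m2 (m2 (adj2 (@sg C)) (sigma a)) (adj2 (adj2 sg)) r c = 1 * sp' a * sigma (sf a) r c.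
Proof.
move=> a; case: a => [[|[|[|[|?]]]] ?] //=. all: split; [solve_ph|]. all: case; case; rewrite /m2 /adj2 /sg /sigma /sp /sp' /sf /=; csimp; rewrite ?conjCK; csimp. all: ring.
Qed.

Lemma sgate_clifford {C : numClosedFieldType} n (k : 'I_n) : clifford (1 *: lgate (@sg C) k).
Proof.
apply: (@lgate_clifford C n sg k 1 1 sf sf sp sp' _ sg_table sg_table') => //.
by rewrite conj1' !mulr1.
Qed.

Lemma sgate_conj {C : numClosedFieldType} n (k : 'I_n) (p : {ffun 'I_n -> 'I_4}) :
  let V := 1 *: lgate (@sg C) k in
  V *m pauli p *m adjmx V = sp (p k) *: pauli (upd p k (sf (p k))).
Proof.
rewrite /= (@slgate_conj _ _ _ _ _ _ (sf (p k)) (1 * sp (p k))); last first.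
  by move=> r c; apply: (proj2 (sg_table (p k))).
by rewrite conj1' !mul1r.
Qed.

Arguments sigma {C} a r c.

Definition sgn {C : numClosedFieldType} (b : bool) : C := if b then -1 else 1.
Definition cz {C : numClosedFieldType} n (a b : 'I_n) : 'M[C]_(2^n) :=
  diag_mx (\row_(i < 2^n) sgn (bitk a i && bitk b i)).

Lemma cz_adj {C : numClosedFieldType} n (a b : 'I_n) : adjmx (@cz C n a b) = cz a b.
Proof.
apply/matrixP => i j; rewrite !mxE rmorphMn eq_sym.
case: eqVneq => [->|_] //=.
by rewrite /sgn; case: (_ && _); rewrite ?conjN' conj1'.
Qed.

Lemma prod2 {C : comPzRingType} n (a b : 'I_n) (F : 'I_n -> C) : a != b ->
  \prod_m F m = F a * F b * \prod_(m | (m != a) && (m != b)) F m.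
Proof. by move=> Hab; rewrite (bigD1 a) //= (bigD1 b) 1?eq_sym //= mulrA. Qed.

Lemma cz_conj {C : numClosedFieldType} n (a b : 'I_n) (p : {ffun 'I_n -> 'I_4}) x y (c : C) : a != b ->
  (forall ia ja ib jb, sgn (ia && ib) * (sigma (p a) ia ja * sigma (p b) ib jb) * sgn (ja && jb)
     = c * (sigma x ia ja * sigma y ib jb)) ->
  cz a b *m pauli p *m adjmx (cz a b) = c *: pauli (upd (upd p a x) b y).
Proof.
move=> Hab H; rewrite cz_adj /cz mul_diag_mx mul_mx_diag; apply/matrixP => i j; rewrite !mxE.
rewrite (prod2 _ Hab) [in RHS](prod2 _ Hab) /upd !ffunE !eqxx (negbTE Hab).
rewrite [in RHS](eq_bigr (fun m => sigma (p m) (bitk m i) (bitk m j))); last first.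
  by move=> m Hm; case/andP: Hm => Ha Hb; rewrite !ffunE (negbTE Ha) (negbTE Hb).
transitivity ((sgn (C:=C) (bitk a i && bitk b i) * (sigma (p a) (bitk a i) (bitk a j) * sigma (p b) (bitk b i) (bitk b j)) * sgn (bitk a j && bitk b j)) * \prod_(m | (m != a) && (m != b)) sigma (p m) (bitk m i) (bitk m j)); first by ring.
by rewrite H; ring.
Qed.

Lemma cz_tab {C : numClosedFieldType} (x y : 'I_4) : exists x' y' (c : C), isph c /\
  forall ia ja ib jb, sgn (ia && ib) * (sigma x ia ja * sigma y ib jb) * sgn (ja && jb)
     = c * (sigma x' ia ja * sigma y' ib jb).
Proof.
case: x => [[|[|[|[|?]]]] ?] //=. all: case: y => [[|[|[|[|?]]]] ?] //=.
- by exists s0, s0, (1); split; [solve_ph| do 4 case; rewrite /sgn /sigma /=; csimp; ring].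
- by exists s3, s1, (1); split; [solve_ph| do 4 case; rewrite /sgn /sigma /=; csimp; ring].
- by exists s3, s2, (1); split; [solve_ph| do 4 case; rewrite /sgn /sigma /=; csimp; ring].
- by exists s0, s3, (1); split; [solve_ph| do 4 case; rewrite /sgn /sigma /=; csimp; ring].
- by exists s1, s3, (1); split; [solve_ph| do 4 case; rewrite /sgn /sigma /=; csimp; ring].
- by exists s2, s2, (1); split; [solve_ph| do 4 case; rewrite /sgn /sigma /=; csimp; ring].
- by exists s2, s1, (-1); split; [solve_ph| do 4 case; rewrite /sgn /sigma /=; csimp; ring].
- by exists s1, s0, (1); split; [solve_ph| do 4 case; rewrite /sgn /sigma /=; csimp; ring].
- by exists s2, s3, (1); split; [solve_ph| do 4 case; rewrite /sgn /sigma /=; csimp; ring].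
- by exists s1, s2, (-1); split; [solve_ph| do 4 case; rewrite /sgn /sigma /=; csimp; ring].
- by exists s1, s1, (1); split; [solve_ph| do 4 case; rewrite /sgn /sigma /=; csimp; ring].
- by exists s2, s0, (1); split; [solve_ph| do 4 case; rewrite /sgn /sigma /=; csimp; ring].
- by exists s3, s0, (1); split; [solve_ph| do 4 case; rewrite /sgn /sigma /=; csimp; ring].
- by exists s0, s1, (1); split; [solve_ph| do 4 case; rewrite /sgn /sigma /=; csimp; ring].
- by exists s0, s2, (1); split; [solve_ph| do 4 case; rewrite /sgn /sigma /=; csimp; ring].
- by exists s3, s3, (1); split; [solve_ph| do 4 case; rewrite /sgn /sigma /=; csimp; ring].
Qed.

Lemma cz_clifford {C : numClosedFieldType} n (a b : 'I_n) : a != b -> clifford (@cz C n a b).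
Proof.
move=> Hab.
have K : forall p, in_pauli_group (cz a b *m pauli p *m adjmx (@cz C n a b)).
  move=> p; have [x' [y' [c [Hc Ht]]]] := cz_tab (C:=C) (p a) (p b).
  by exists c, (upd (upd p a x') b y'); split => //; apply: cz_conj.
apply: clifford_of => //.
  rewrite /unitary -[X in X *m _](mulmx1) -(pauli_id1 (C:=C) n).
  rewrite (@cz_conj _ _ _ _ _ s0 s0 1) //.
    by rewrite scale1r !upd_id pauli_id1.
  by rewrite !ffunE; do 4 case; rewrite /sgn /sigma /=; csimp.
by move=> p; rewrite {1}cz_adj -{2}(cz_adj a b); apply: K.
Qed.

Arguments sigma {C} a r c.

Definition Ssum {C : numClosedFieldType} n (xs : seq 'M[C]_(2^n)) (p : {ffun 'I_n -> 'I_4}) : C :=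
  \sum_(P <- xs) `|\tr (P *m pauli p)|.

Lemma tr_conj {C : numClosedFieldType} n (P V W : 'M[C]_(2^n)) :
  \tr (P *m (V *m W *m adjmx V)) = \tr ((adjmx V *m P *m V) *m W).
Proof. by rewrite !mulmxA mxtrace_mulC !mulmxA. Qed.

Lemma orbit_conj {C : numClosedFieldType} n (z : 'cV[C]_(2^n)) (U : 'M[C]_(2^n)) (P : 'M[C]_(2^n)) :
  (exists V, clifford V /\ P = V *m proj z *m adjmx V) -> clifford U ->
  exists V, clifford V /\ U *m P *m adjmx U = V *m proj z *m adjmx V.
Proof.
move=> [V [HV ->]] HU; exists (U *m V); split; first exact: clifford_mul.
by rewrite adjmxM !mulmxA.
Qed.

Lemma S_move {C : numClosedFieldType} n (z : 'cV[C]_(2^n)) xs (V : 'M[C]_(2^n)) p q (c : C) :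
  clifford_orbit_enum z xs -> clifford V -> isph c ->
  V *m pauli p *m adjmx V = c *: pauli q -> Ssum xs q = Ssum xs p.
Proof.
move=> [Hu Hxs] HV Hc HE.
have VV : V *m adjmx V = 1%:M by case: HV.
have V'V : adjmx V *m V = 1%:M by apply: unitaryC; case: HV.
have Wq : pauli q = c^-1 *: (V *m pauli p *m adjmx V).
  by rewrite HE scalerA mulVf ?scale1r // isph_neq0.
pose f (P : 'M[C]_(2^n)) := adjmx V *m P *m V.
have finj : injective f.
  move=> P Q; rewrite /f => H.
  have := congr1 (fun M => V *m M *m adjmx V) H; rewrite /= !mulmxA VV !mul1mx.
  by rewrite -!mulmxA VV !mulmx1.
have Hperm : perm_eq (map f xs) xs.
  apply: uniq_perm; rewrite ?map_inj_uniq //.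
  move=> P; apply/idP/idP.
    case/mapP => Q /Hxs HQ ->; apply/Hxs; rewrite /f.
    have := orbit_conj HQ (clifford_adj HV); by rewrite adjmxK.
  move=> /Hxs HP; apply/mapP; exists (V *m P *m adjmx V).
    by apply/Hxs; apply: orbit_conj.
  by rewrite /f !mulmxA V'V mul1mx -mulmxA V'V mulmx1.
rewrite /Ssum; transitivity (\sum_(P <- xs) `|\tr (f P *m pauli p)|).
  apply: eq_bigr => P _; rewrite Wq -scalemxAr mxtraceZ normrM tr_conj.
  by rewrite isph_norm ?mul1r //; apply: isph_inv.
by rewrite -(big_map f predT (fun P => `|\tr (P *m pauli p)|)) (perm_big _ Hperm).
Qed.

Definition phs {C : numClosedFieldType} (k : 'I_4) : C :=
  match val k with 0%N => 1 | 1%N => -1 | 2%N => 'i | _ => -'i end.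

Lemma isph_phs {C : numClosedFieldType} (c : C) : isph c <-> exists k, c = phs k.
Proof.
split.
  by case=> ->; [exists s0|exists s1|exists s2|exists s3].
case=> k ->; case: k => [[|[|[|[|?]]]] ?] //=; rewrite /phs /=; solve_ph.
Qed.

Lemma char_inv {C : numClosedFieldType} n (U rho : 'M[C]_(2^n)) :
  clifford U -> char_l1 (U *m rho *m adjmx U) = char_l1 rho.
Proof.
move=> HU.
have UU : U *m adjmx U = 1%:M by case: HU.
have HU' := clifford_adj HU.
pose M q := adjmx U *m pauli q *m U.
have HM : forall q, exists c s, isph c /\ M q = c *: pauli s.
  move=> q; case: HU' => _ [H1 _].
  have := H1 (pauli q) _; rewrite adjmxK; apply.
  by exists 1, q; split; [exact: isph1|rewrite scale1r].
pose sf q := odflt q [pick s | [exists k, M q == phs k *: pauli s]].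
have Hsf : forall q, exists c, isph c /\ M q = c *: pauli (sf q).
  move=> q; rewrite /sf; case: pickP => [s /existsP [k /eqP Hk]|H0] /=.
    by exists (phs k); split => //; apply/isph_phs; exists k.
  have [c [s [Hc Hs]]] := HM q; have [k Hk] := (proj1 (isph_phs c) Hc).
  by move: (H0 s) => /existsP []; exists k; rewrite Hs Hk.
have Hback : forall q, pauli q = U *m M q *m adjmx U.
  by move=> q; rewrite /M !mulmxA UU mul1mx -mulmxA UU mulmx1.
have sinj : injective sf.
  move=> q q' Hqq; have [c [Hc Hq]] := Hsf q; have [c' [Hc' Hq']] := Hsf q'.
  have E : pauli q' = (c' / c) *: pauli q.
    rewrite Hback Hq' -Hqq (Hback q) Hq -!scalemxAr -!scalemxAl scalerA.
    by rewrite -mulrA mulVf ?mulr1 // isph_neq0.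
  apply/eqP; apply: contraT => Hne.
  have Hne' : q' != q by rewrite eq_sym.
  have := pauli_tr (C:=C) q' q; rewrite (negbTE Hne') E -scalemxAl mxtraceZ pauli_tr eqxx.
  move/eqP; rewrite !mulf_eq0 invr_eq0 (negbTE (isph_neq0 Hc')) (negbTE (isph_neq0 Hc)) /=.
  by rewrite pnatr_eq0 expn_eq0.

rewrite /char_l1 [in RHS](reindex_inj sinj); apply: eq_bigr => q _.
rewrite tr_conj -/(M q); have [c [Hc ->]] := Hsf q.
by rewrite -scalemxAl mxtraceZ normrM isph_norm // mul1r.
Qed.

Lemma sum_const_seq {C : numClosedFieldType} T (s : seq T) (x : C) : \sum_(i <- s) x = x *+ size s.
Proof. by elim: s => [|a s IH]; rewrite ?big_nil ?big_cons ?IH ?mulrS. Qed.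

Lemma tr_orbit {C : numClosedFieldType} n (z : 'cV[C]_(2^n)) (U : 'M[C]_(2^n)) :
  (adjmx z *m z) 0 0 = 1 -> clifford U -> \tr (U *m proj z *m adjmx U) = 1.
Proof.
move=> hz HU; have U'U : adjmx U *m U = 1%:M by apply: unitaryC; case: HU.
rewrite mxtrace_mulC mulmxA U'U mul1mx /proj mxtrace_mulC.
by rewrite /mxtrace big_ord1.
Qed.

Arguments sigma {C} a r c.

Lemma upd_same n (p : {ffun 'I_n -> 'I_4}) k v : p k = v -> upd p k v = p.
Proof. by move=> H; apply/ffunP => m; rewrite ffunE; case: eqP => // ->. Qed.
Lemma upd_upd n (p : {ffun 'I_n -> 'I_4}) k v w : upd (upd p k v) k w = upd p k w.
Proof. by apply/ffunP => m; rewrite !ffunE; case: eqP. Qed.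
Lemma upd_at n (p : {ffun 'I_n -> 'I_4}) k v : upd p k v k = v.
Proof. by rewrite ffunE eqxx. Qed.
Lemma upd_oth n (p : {ffun 'I_n -> 'I_4}) k v m : m != k -> upd p k v m = p m.
Proof. by move=> H; rewrite ffunE (negbTE H). Qed.

Lemma L_H {C : numClosedFieldType} n (z : 'cV[C]_(2^n)) xs (p : {ffun 'I_n -> 'I_4}) k :
  clifford_orbit_enum z xs -> Ssum xs (upd p k (hf (p k))) = Ssum xs p.
Proof.
move=> Ho; apply: (S_move Ho (hgate_clifford k) _ (hgate_conj k p)).
exact: (proj1 (hs_table (p k))).
Qed.

Lemma L_S {C : numClosedFieldType} n (z : 'cV[C]_(2^n)) xs (p : {ffun 'I_n -> 'I_4}) k :
  clifford_orbit_enum z xs -> Ssum xs (upd p k (sf (p k))) = Ssum xs p.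
Proof.
move=> Ho; apply: (S_move Ho (sgate_clifford k) _ (sgate_conj k p)).
exact: (proj1 (sg_table (p k))).
Qed.

Lemma L_CZ {C : numClosedFieldType} n (z : 'cV[C]_(2^n)) xs (p : {ffun 'I_n -> 'I_4}) a b :
  clifford_orbit_enum z xs -> a != b -> p a = s1 -> p b = s3 -> Ssum xs (upd p b s0) = Ssum xs p.
Proof.
move=> Ho Hab Ha Hb.
have := @cz_conj C n a b p s1 s0 1 Hab; rewrite (upd_same Ha) Ha Hb => H.
apply: (S_move Ho (cz_clifford Hab) isph1); apply: H.
by do 4 case; rewrite /sgn /sigma /=; csimp.
Qed.

Lemma L_CZ' {C : numClosedFieldType} n (z : 'cV[C]_(2^n)) xs (p : {ffun 'I_n -> 'I_4}) a b :
  clifford_orbit_enum z xs -> a != b -> p a = s1 -> p b = s0 -> Ssum xs (upd p b s3) = Ssum xs p.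
Proof.
move=> Ho Hab Ha Hb.
have := @cz_conj C n a b p s1 s3 1 Hab; rewrite (upd_same Ha) Ha Hb => H.
apply: (S_move Ho (cz_clifford Hab) isph1); apply: H.
by do 4 case; rewrite /sgn /sigma /=; csimp.
Qed.

Lemma kill {C : numClosedFieldType} n (z : 'cV[C]_(2^n)) xs (p : {ffun 'I_n -> 'I_4}) a b :
  clifford_orbit_enum z xs -> a != b -> p a = s1 -> Ssum xs (upd p b s0) = Ssum xs p.
Proof.
move=> Ho Hab Ha.
have K3 : forall p : {ffun 'I_n -> 'I_4}, p a = s1 -> p b = s3 -> Ssum xs (upd p b s0) = Ssum xs p.
  by move=> p' H1 H2; exact: (L_CZ Ho Hab H1 H2).
have K1 : forall p : {ffun 'I_n -> 'I_4}, p a = s1 -> p b = s1 -> Ssum xs (upd p b s0) = Ssum xs p.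
  move=> p' H1 H2; rewrite -(L_H p' b Ho) H2 -(upd_upd p' b s3 s0).
  by apply: K3; rewrite ?upd_at // upd_oth.
case Eb: (p b) => [[|[|[|[|?]]]] Hb].
- by rewrite upd_same // Eb; apply: val_inj.
- by apply: K1 => //; rewrite Eb; apply: val_inj.
- rewrite -(L_S p b Ho) Eb -(upd_upd p b s1 s0) /=.
  by rewrite [sf _]/sf /=; apply: K1; rewrite ?upd_at // upd_oth.
- by apply: K3 => //; rewrite Eb; apply: val_inj.
- by [].
Qed.

Arguments sigma {C} a r c.

Definition xa n (a : 'I_n) := upd (pauli_id n) a s1.

Lemma R1 {C : numClosedFieldType} n (z : 'cV[C]_(2^n)) xs (a : 'I_n) :
  clifford_orbit_enum z xs ->
  forall p : {ffun 'I_n -> 'I_4}, p a = s1 -> Ssum xs p = Ssum xs (xa a).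
Proof.
move=> Ho.
pose A (p : {ffun 'I_n -> 'I_4}) := [pred m | (m != a) && (p m != s0)].
suff: forall k (p : {ffun 'I_n -> 'I_4}), (#|A p| <= k)%N -> p a = s1 -> Ssum xs p = Ssum xs (xa a).
  by move=> H p; apply: (H #|A p|).
elim=> [|k IH] p.
  rewrite leqn0 => /eqP /card0_eq HA Ha; congr (Ssum xs _); apply/ffunP => m.
  rewrite !ffunE; case: eqVneq => [->//|Hm].
  by have := HA m; rewrite !inE Hm /= => /negbFE /eqP.
move=> Hk Ha; case: (posnP #|A p|) => [H0|].
  by apply: (IH p) => //; rewrite H0.
case/card_gt0P => b; rewrite inE => /andP [Hba Hb].
have Hab : a != b by rewrite eq_sym.
rewrite -(kill Ho Hab Ha).
apply: IH; last by rewrite upd_oth.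
move: Hk; rewrite (cardD1 b) inE Hba Hb /= add1n ltnS; apply: leq_trans.
apply: subset_leq_card; apply/subsetP => m; rewrite !inE !ffunE.
case: (eqVneq m b) => [->|Hmb]; first by rewrite eqxx andbF.
by [].
Qed.

Lemma trans_main {C : numClosedFieldType} n (z : 'cV[C]_(2^n.+1)) xs (p : {ffun 'I_n.+1 -> 'I_4}) :
  clifford_orbit_enum z xs -> p != pauli_id n.+1 -> Ssum xs p = Ssum xs (xa ord0).
Proof.
move=> Ho Hp.
have [a Ha] : exists a, p a != s0.
  apply/existsP; apply: contraR Hp; rewrite negb_exists => /forallP H.
  by apply/eqP/ffunP => m; rewrite ffunE; have := H m; rewrite negbK => /eqP.
have [p1 [H1 E1]] : exists p1 : {ffun 'I_n.+1 -> 'I_4}, p1 a = s1 /\ Ssum xs p1 = Ssum xs p.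
  case Ea: (p a) Ha => [[|[|[|[|?]]]] Hb] Ha.
  - by case/eqP: Ha; apply: val_inj.
  - by exists p; split => //; rewrite Ea; apply: val_inj.
  - exists (upd p a (sf (p a))); split; last exact: (@L_S C n.+1 z xs p a Ho).
    by rewrite upd_at Ea.
  - exists (upd p a (hf (p a))); split; last exact: (@L_H C n.+1 z xs p a Ho).
    by rewrite upd_at Ea.
  - by [].
rewrite -E1 (R1 Ho H1).
case: (eqVneq a ord0) => [->//|Ha0].
have H2 := @L_CZ' C n.+1 z xs (xa a) a ord0 Ho Ha0.
rewrite -H2; last 2 first.
- by rewrite upd_at.
- by rewrite /xa upd_oth 1?eq_sym // ffunE.
set p2 := upd (xa a) ord0 s3.
rewrite -(@L_H C n.+1 z xs p2 ord0 Ho) /p2 upd_at /=.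
apply: (R1 Ho); exact: upd_at.
Qed.

Lemma psd_sq1 {C : numClosedFieldType} m (B : 'M[C]_m) : psd B -> B *m B = 1%:M -> B = 1%:M.
Proof.
move=> Hp H2; set D := B - 1%:M.
have BD : B *m D = - D by rewrite /D mulmxBr H2 mulmx1 opprB.
have Du : forall u : 'cV[C]_m, D *m u = 0.
  move=> u; set w := D *m u.
  have E : adjmx w *m B *m w = - (adjmx w *m w).
    by rewrite {2}/w !mulmxA -(mulmxA _ B D) BD mulmxN mulNmx -mulmxA.
  have := Hp w; rewrite E mxE oppr_ge0 => Hle.
  have Hs : (adjmx w *m w) 0 0 = 0.
    apply/eqP; rewrite eq_le Hle /= mxE; apply: sumr_ge0 => i _.
    by rewrite !mxE mulrC mul_conjC_ge0.
  move: Hs; rewrite mxE => /psumr_eq0P H.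
  have {}H := H (fun i _ => ltac:(by rewrite !mxE mulrC mul_conjC_ge0)).
  apply/matrixP => i j; rewrite (ord1 j) mxE.
  have := H i isT; rewrite !mxE mulrC => /eqP; rewrite mulf_eq0 conjC_eq0 orbb => /eqP.
  by [].
have D0 : D = 0.
  apply/matrixP => i j; have := Du (delta_mx j 0); rewrite -colE => /matrixP /(_ i 0).
  by rewrite !mxE.
by apply/eqP; rewrite -subr_eq0 -/D D0.
Qed.

Lemma trace_norm_pauli {C : numClosedFieldType} n (p : {ffun 'I_n -> 'I_4}) t :
  trace_norm_is (pauli p : 'M[C]_(2^n)) t -> t = (2 ^ n)%:R.
Proof.
move=> [B [HB [H2 ->]]]; rewrite pauli_herm pauli_sq in H2.
by rewrite (psd_sq1 HB H2) mxtrace1.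
Qed.

Unset Implicit Arguments.
Theorem theorem2 (C : numClosedFieldType) (n : nat) (z : 'cV[C]_(2 ^ n))
  (xs : seq 'M[C]_(2 ^ n)) (p : {ffun 'I_n -> 'I_4}) (t : C) :
  (adjmx z *m z) 0 0 = 1 ->
  clifford_orbit_enum z xs ->
  p != pauli_id n ->
  trace_norm_is (pauli p) t ->
  povm_l1 xs (pauli p) =
    (char_l1 (proj z) - 1) / (((2 ^ n)%:R + 1) * ((2 ^ n)%:R - 1)) * t.
Proof.
move=> hz Ho Hp Ht; rewrite (trace_norm_pauli Ht).
case: n z xs p Hp Ht hz Ho => [|n] z xs p Hp Ht hz Ho.
  by case/eqP: Hp; apply/ffunP => -[].
have [Hu Hxs] := Ho.
set d : C := (2 ^ n.+1)%:R.
set N : C := (size xs)%:R.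
set ch := char_l1 (proj z).
set S0 := Ssum xs (xa ord0).
have Hmem : forall P, P \in xs -> char_l1 P = ch /\ \tr P = 1.
  move=> P /Hxs [U [HU ->]]; split; first exact: char_inv.
  exact: tr_orbit.
have Nnz : N != 0.
  have Hin : proj z \in xs.
    apply/Hxs; exists 1%:M; split; [exact: clifford1|by rewrite mul1mx adjmx1 mulmx1].
  by rewrite /N pnatr_eq0 size_eq0; apply/eqP => E; rewrite E in Hin.
have Hsum1 : \sum_q Ssum xs q = N * ch.
  rewrite /Ssum exchange_big /= (eq_big_seq (fun _ => ch)).
    by rewrite sum_const_seq -mulr_natl.
  move=> P HP; rewrite -(proj1 (Hmem P HP)) /char_l1; apply: eq_bigr => q _.
  by rewrite mxtrace_mulC.
have Hid : Ssum xs (pauli_id n.+1) = N.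
  rewrite /Ssum (eq_big_seq (fun _ => 1)).
    by rewrite sum_const_seq.
  by move=> P HP; rewrite pauli_id1 mulmx1 (proj2 (Hmem P HP)) normr1.
have Hsum2 : \sum_q Ssum xs q = N - S0 + S0 * (4 ^ n.+1)%:R.
  rewrite (bigD1 (pauli_id n.+1)) //= Hid.
  rewrite (eq_bigr (fun _ => S0)); last by move=> q Hq; apply: trans_main.
  have := sumr_const [pred q : {ffun 'I_n.+1 -> 'I_4} | q != pauli_id n.+1] S0.
  move=> ->.
  have : #|[pred q : {ffun 'I_n.+1 -> 'I_4} | q != pauli_id n.+1]| = (4 ^ n.+1).-1.
    rewrite cardC1 card_ffun !card_ord //.
  move=> ->; have -> : (4 ^ n.+1)%:R = ((4 ^ n.+1).-1)%:R + 1 :> C.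
    by rewrite natr1 prednK ?expn_gt0.
  by rewrite -mulr_natr; ring.
have d4 : (4 ^ n.+1)%:R = d ^+ 2 :> C by rewrite /d -natrX -expnM mulnC expnM.
have dp : d + 1 != 0 by rewrite /d natr1 pnatr_eq0.
have dm : d - 1 != 0.
  rewrite subr_eq0 /d pnatr_eq1; apply/eqP => H.
  by move: (ltn_exp2l 0 n.+1 (isT : (1 < 2)%N)); rewrite expn0 H.
have E : N * ch = N - S0 + S0 * d ^+ 2 by rewrite -Hsum1 Hsum2 d4.
have E2 : S0 * ((d + 1) * (d - 1)) = N * (ch - 1).
  transitivity (N * ch - N); last by ring.
  by rewrite E; ring.
have HS0 : S0 = N * (ch - 1) / ((d + 1) * (d - 1)).
  by rewrite -E2 mulfK // mulf_neq0.
have Hpov : povm_l1 xs (pauli p) = d / N * Ssum xs p.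
  rewrite /povm_l1 /Ssum mulr_sumr; apply: eq_bigr => P _.
  rewrite -scalemxAl mxtraceZ normrM ger0_norm //.
  by rewrite divr_ge0 // ler0n.
rewrite Hpov (trans_main Ho Hp) -/S0 HS0.
by field; rewrite Nnz dp dm.
Qed.
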